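(* Let $G$ be a finite simple graph and $c_0:V(G)\to\mathbb{Z}$ an initial configuration, with $(c_t)_{t\ge0}$ the configurations of the diffusion process. Then $G$ with $c_0$ is tight if and only if there exists $t\geq 0$ such that $c_t$ has property plus.
   Context: Diffusion process: for a configuration $c_t:V(G)\to\mathbb{Z}$ and a vertex $u$, let $\Delta_t^-(u)=|\{w\in N(u): c_t(u)>c_t(w)\}|$, $\Delta_t^+(u)=|\{w\in N(u): c_t(u)<c_t(w)\}|$ and $\Delta_t(u)=\Delta_t^+(u)-\Delta_t^-(u)$. Then $c_{t+1}(u)=c_t(u)+\Delta_t(u)$ for all $u$ simultaneously. The pair $(G,c_0)$ is called tight if the process is eventually fixed or eventually periodic with period length $2$, i.e. there exists $t\geq0$ with $c_{t+2}=c_t$. A configuration $c_i$ has property plus if (1) $c_i(u)+\Delta_i(u)>c_i(v)+\Delta_i(v)$ for every edge $uv$ with $c_i(u)<c_i(v)$, and (2) $c_i(u)+\Delta_i(u)=c_i(v)+\Delta_i(v)$ for every edge $uv$ with $c_i(u)=c_i(v)$. *)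

(* Defs.v *)
From mathcomp Require Import all_boot all_order all_algebra.
Set Implicit Arguments. Unset Strict Implicit. Unset Printing Implicit Defensive.
Import Order.TTheory GRing.Theory Num.Theory.
Local Open Scope ring_scope.

Definition simple_graph (T : finType) (e : rel T) : Prop :=
  symmetric e /\ irreflexive e.

Section Diffusion.
Variables (T : finType) (e : rel T).

Definition delta_minus (c : T -> int) (u : T) : int :=
  (#|[set w | e u w & c w < c u]|)%:Z.
Definition delta_plus (c : T -> int) (u : T) : int :=
  (#|[set w | e u w & c u < c w]|)%:Z.
Definition delta (c : T -> int) (u : T) : int :=
  delta_plus c u - delta_minus c u.

Definition step (c : T -> int) : T -> int := fun u => c u + delta c u.

Definition config (c0 : T -> int) (t : nat) : T -> int := iter t step c0.

Definition tight (c0 : T -> int) : Prop :=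
  exists t : nat, config c0 t.+2 = config c0 t.

Definition property_plus (c : T -> int) : Prop :=
  (forall u v, e u v -> c u < c v -> c u + delta c u > c v + delta c v) /\
  (forall u v, e u v -> c u = c v -> c u + delta c u = c v + delta c v).
End Diffusion.

(* Main.v *)
Require Import Defs.
From mathcomp Require Import all_boot all_order all_algebra.
From mathcomp Require Import zify.
From Stdlib Require Import FunctionalExtensionality.
Import Order.TTheory GRing.Theory Num.Theory.
Local Open Scope ring_scope.
Set Implicit Arguments. Unset Strict Implicit.

Section Aux.
Variables (T : finType) (e : rel T).

Lemma card_int (P : pred T) : (#|[set w | P w]|)%:Z = \sum_w ((P w)%:R : int).
Proof.
rewrite -sum1dep_card big_mkcond /= -natz natr_sum; apply: eq_bigr => w _.
by case: (P w).
Qed.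

Lemma delta_sum (c : T -> int) u :
  delta e c u = \sum_w (e u w)%:R * sgz (c w - c u).
Proof.
rewrite /delta /delta_plus /delta_minus !card_int -sumrB.
apply: eq_bigr => w _.
case: (e u w) => /=; last by rewrite !mul0r subrr.
rewrite mul1r; case: ltgtP => H.
- by rewrite gtr0_sgz // subr_gt0.
- by rewrite ltr0_sgz // subr_lt0.
- by rewrite H !subrr.
Qed.

Definition S (c x : T -> int) :=
  \sum_u \sum_w (e u w)%:R * sgz (c w - c u) * (x w - x u).

Lemma S_eq (c x : T -> int) : symmetric e ->
  S c x = - (2%:R * \sum_u x u * delta e c u).
Proof.
move=> sym.
have H1 : \sum_u \sum_w ((e u w)%:R * sgz (c w - c u) * x w : int)
   = - \sum_u \sum_w ((e u w)%:R * sgz (c w - c u) * x u).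
  rewrite exchange_big /= -sumrN; apply: eq_bigr => u _.
  rewrite -sumrN; apply: eq_bigr => w _.
  by rewrite sym -opprB sgzN mulrN mulNr.
have -> : S c x = \sum_u \sum_w ((e u w)%:R * sgz (c w - c u) * x w)
     - \sum_u \sum_w ((e u w)%:R * sgz (c w - c u) * x u).
  rewrite /S -sumrB; apply: eq_bigr => u _; rewrite -sumrB; apply: eq_bigr => w _.
  by rewrite mulrBr.
rewrite H1 mulr_sumr -opprD; congr (- _).
rewrite -big_split /=; apply: eq_bigr => u _.
rewrite delta_sum mulr_sumr mulr_sumr -big_split /=; apply: eq_bigr => w _.
by rewrite mulr2n mulrDl mul1r mulrC.
Qed.

End Aux.


Lemma sgz_cases (x : int) : (0 < x /\ sgz x = 1) \/ (x < 0 /\ sgz x = -1) \/ (x = 0 /\ sgz x = 0).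
Proof.
case: (ltgtP x 0) => h.
- by right; left; split => //; rewrite ltr0_sgz.
- by left; split => //; rewrite gtr0_sgz.
- by right; right; rewrite h.
Qed.

Lemma term_ge0 (x y : int) : 0 <= sgz x * y + sgz y * y.
Proof.
case: (sgz_cases x) => [[h ->]|[[h ->]|[h ->]]];
case: (sgz_cases y) => [[h' ->]|[[h' ->]|[h' ->]]]; lia.
Qed.

Lemma key (x y : int) : sgz x * y + sgz y * y = 0 -> sgz y * x + sgz x * x = 0 ->
  (0 < x -> y < 0) /\ (x = 0 -> y = 0).
Proof.
case: (sgz_cases x) => [[h ->]|[[h ->]|[h ->]]];
case: (sgz_cases y) => [[h' ->]|[[h' ->]|[h' ->]]]; lia.
Qed.

Section Main.
Variables (T : finType) (e : rel T).
Hypothesis sym : symmetric e.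

Lemma flip (a : T -> int) : property_plus e a ->
  forall u, delta e (step e a) u = - delta e a u.
Proof.
move=> [P1 P2] u.
have E1 : forall w, e u w -> (step e a u < step e a w) = (a w < a u).
  move=> w euw; rewrite /step; apply/idP/idP => h.
  - case: (ltgtP (a w) (a u)) => // h2.
    + by move: (P1 u w euw h2) => h3; lia.
    + by move: (P2 u w euw (esym h2)) => h3; lia.
  - by move: (P1 w u (etrans (sym w u) euw) h) => h3; lia.
have E2 : forall w, e u w -> (step e a w < step e a u) = (a u < a w).
  move=> w euw; rewrite /step; apply/idP/idP => h.
  - case: (ltgtP (a w) (a u)) => // h2.
    + by move: (P1 w u (etrans (sym w u) euw) h2) => h3; lia.
    + by move: (P2 u w euw (esym h2)) => h3; lia.
  - by move: (P1 u w euw h) => h3; lia.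
rewrite /delta opprB; congr (_ - _).
- rewrite /delta_plus /delta_minus; congr Posz; apply: eq_card => w; rewrite !inE.
  case euw: (e u w) => //=; exact: E1.
- rewrite /delta_plus /delta_minus; congr Posz; apply: eq_card => w; rewrite !inE.
  case euw: (e u w) => //=; exact: E2.
Qed.

Lemma sum_zero (F : T -> T -> int) :
  (forall u w, 0 <= F u w) -> \sum_u \sum_w F u w = 0 -> forall u w, F u w = 0.
Proof.
move=> H0 H u w.
have Hu := psumr_eq0P (fun u _ => sumr_ge0 _ (fun w _ => H0 u w)) H (i:=u) isT.
exact: (psumr_eq0P (fun w _ => H0 u w) Hu (i:=w) isT).
Qed.

End Main.

Theorem theorem14 (T : finType) (e : rel T) (c0 : T -> int) :
  simple_graph e ->
  (tight e c0 <-> exists t : nat, property_plus e (config e c0 t)).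
Proof.
move=> [sym irr]; split.
- move=> [t Ht]; exists t.
  set a := config e c0 t in Ht *.
  set b := step e a.
  have Hb : step e b = a by exact: Ht.
  have Hd : forall u, delta e b u = - delta e a u.
    move=> u; have := congr1 (fun f => f u) Hb; rewrite /step /= => h.
    rewrite /b /step in h *; lia.
  have hs : forall x : T -> int, \sum_u x u * delta e b u = - \sum_u x u * delta e a u.
    by move=> x; rewrite -sumrN; apply: eq_bigr => u _; rewrite Hd mulrN.
  have S1 : S e a b + S e b b = 0.
    rewrite !S_eq // hs; lia.
  have S2 : S e b a + S e a a = 0.
    rewrite !S_eq // hs; lia.
  pose F1 u w := (e u w)%:R * sgz (a w - a u) * (b w - b u) + (e u w)%:R * sgz (b w - b u) * (b w - b u) : int.
  pose F2 u w := (e u w)%:R * sgz (b w - b u) * (a w - a u) + (e u w)%:R * sgz (a w - a u) * (a w - a u) : int.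
  have nn : forall (x y : int) (E : bool), 0 <= E%:R * sgz x * y + E%:R * sgz y * y.
    move=> x y [|]; rewrite ?mul1r ?mul0r ?addr0 //; exact: term_ge0.
  have Z1 : forall u w, F1 u w = 0.
    apply: (sum_zero (F:=F1)) => [u w|]; first exact: nn.
    rewrite -[RHS]S1 /S -big_split /=; apply: eq_bigr => u _.
    by rewrite -big_split.
  have Z2 : forall u w, F2 u w = 0.
    apply: (sum_zero (F:=F2)) => [u w|]; first exact: nn.
    rewrite -[RHS]S2 /S -big_split /=; apply: eq_bigr => u _.
    by rewrite -big_split.
  have K : forall u v, e u v -> (a u < a v -> b v < b u) /\ (a u = a v -> b u = b v).
    move=> u v euv; have := Z1 u v; have := Z2 u v; rewrite /F1 /F2 euv !mul1r => h2 h1.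
    have [k1 k2] := key h1 h2.
    split => h; [have := k1 ltac:(lia) | have := k2 ltac:(lia)]; lia.
  split => u v euv h.
  + exact: (proj1 (K u v euv) h).
  + exact: (proj2 (K u v euv) h).
- move=> [t Ht]; exists t.
  have Hf := flip sym Ht.
  rewrite /config /=; apply: functional_extensionality => u.
  rewrite -/(config e c0 t) [LHS]/step Hf /step; lia.
Qed.
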